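(* Let $r\geq 2$ and $0\leq \alpha \leq 1-\frac{1}{r}$. Let $G$ be a graph of order $n\ge 2$, let $\mathbf{x}=(x_{1}, \dots, x_{n})$ be a non-negative unit eigenvector of $A_{\alpha}(G)$ corresponding to $\lambda_{\alpha}(G)$, and let $w\in V(G)$ satisfy $x_{w}=\min \{x_{1}, \dots, x_{n}\}$. Then $$\lambda_{\alpha}(G-w)\geq \lambda_{\alpha}(G)\frac{1-2x^2_{w}}{1-x^2_{w}}-\alpha\frac{1-nx^2_{w}}{1-x^2_{w}}.$$
   Context: $A_\alpha(G)=\alpha D(G)+(1-\alpha)A(G)$, where $A(G)$ is the adjacency matrix and $D(G)$ the diagonal degree matrix of $G$; $\lambda_\alpha(G)$ is its largest eigenvalue. $G-w$ is the graph obtained by deleting vertex $w$ and its incident edges. *)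

(* Defs.v *)
From HB Require Import structures.
From mathcomp Require Import all_boot all_order all_algebra.
From mathcomp Require Import reals.
Set Implicit Arguments. Unset Strict Implicit. Unset Printing Implicit Defensive.
Import Order.TTheory GRing.Theory Num.Theory.
Local Open Scope ring_scope.

Definition simple_graph (n : nat) (adj : rel 'I_n) : Prop :=
  (forall i j, adj i j = adj j i) /\ (forall i, ~~ adj i i).

Definition deg (n : nat) (adj : rel 'I_n) (i : 'I_n) : nat := #|[set j | adj i j]|.

Definition adjmx (R : nzRingType) (n : nat) (adj : rel 'I_n) : 'M[R]_n :=
  \matrix_(i, j) (adj i j)%:R.

Definition degmx (R : nzRingType) (n : nat) (adj : rel 'I_n) : 'M[R]_n :=
  \matrix_(i, j) (if i == j then (deg adj i)%:R else 0).

Definition Aalpha (R : nzRingType) (n : nat) (adj : rel 'I_n) (alpha : R) : 'M[R]_n :=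
  alpha *: degmx R adj + (1 - alpha) *: adjmx R adj.

Definition largest_eigenvalue (R : realFieldType) (n : nat) (A : 'M[R]_n) (l : R) : Prop :=
  eigenvalue A l /\ (forall mu, eigenvalue A mu -> mu <= l).

(* G - w : delete vertex w; vertices of G - w are 'I_n.-1, identified with
   the vertices of G other than w through lift w. *)
Definition del_vertex (n : nat) (adj : rel 'I_n) (w : 'I_n) : rel 'I_n.-1 :=
  fun i j => adj (lift w i) (lift w j).

(* Main.v *)
Require Import Defs.
From HB Require Import structures.
From mathcomp Require Import all_boot all_order all_algebra.
From mathcomp Require Import reals.
From mathcomp Require Import ring lra.
From mathcomp Require Import complex.
Import Order.TTheory GRing.Theory Num.Theory.
Local Open Scope ring_scope.

Section Ray.
Local Open Scope sesquilinear_scope.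
Variables (R : rcfType) (n : nat) (B : 'M[R]_n) (mu : R).
Hypotheses (Bsym : B^T = B) (Hmu : forall a, eigenvalue B a -> a <= mu).

Local Notation C := (complex R).
Local Notation f := (real_complex R).

Lemma ray (v : 'rV[R]_n) : (v *m B *m v^T) 0 0 <= mu * (v *m v^T) 0 0.
Proof.
pose Bc : 'M[C]_n := map_mx f B.
pose vc : 'rV[C]_n := map_mx f v.
have Breal : Bc \is a realmx.
  by apply/mxOverP => i j; rewrite mxE; apply/complex_realP; exists (B i j).
have Bsymc : Bc \is symmetricmx.
  apply/is_hermitianmxP; rewrite expr0 scale1r map_mx_id //.
  by rewrite /Bc map_trmx Bsym.
have Bherm : Bc \is hermsymmx by exact: realsym_hermsym.
have /orthomx_spectralP Beq := hermitian_normalmx Bherm.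
pose P := spectralmx Bc; pose d := spectral_diag Bc.
have Punit : P \in unitmx by exact: spectral_unit.
have Pinv : invmx P = P^t* by apply: invmx_unitary; exact: spectral_unitarymx.
have dreal := hermitian_spectral_diag_real Bherm.
have vcT : vc^t* = vc^T.
  apply/matrixP => i j; rewrite !mxE.
  by apply: conj_Creal; apply/complex_realP; eexists.
pose z := vc *m P^t*.
have zT : z^t* = P *m vc^t* by rewrite /z trmx_mul map_mxM trmxCK.
have PP : P^t* *m P = 1%:M by rewrite -Pinv mulVmx.
have E1 : (v *m B *m v^T)^(real_complex R) = z *m diag_mx d *m z^t*.
  rewrite zT vcT !map_mxM map_trmx -/Bc -/vc.
  rewrite {1}Beq -/P -/d Pinv /z !mulmxA.
  done.
have E2 : (v *m v^T)^(real_complex R) = z *m z^t*.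
  rewrite zT vcT map_mxM map_trmx -/vc /z -mulmxA (mulmxA _ P) PP mul1mx.
  done.
have key : (z *m diag_mx d *m z^t*) 0 0 <= f mu * (z *m z^t*) 0 0.
  rewrite mul_mx_diag !mxE mulr_sumr; apply: ler_sum => k _; rewrite !mxE.
  rewrite mulrAC mulrC; apply: ler_wpM2r.
    by rewrite -normCK exprn_ge0.
  have /complex_realP [dk dkE] : d 0 k \is Num.real by exact: (mxOverP dreal).
  rewrite dkE lecR; apply: Hmu.
  have : eigenvalue Bc (d 0 k).
    apply/eigenvalueP; exists (row k P).
      rewrite rowE {1}Beq -/P -/d !mulmxA mulmxK //.
      by rewrite -(rowE k (diag_mx d)) row_diag_mx -scalemxAl -rowE.
    apply/eqP => /(congr1 (mulmx^~ (invmx P))).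
    rewrite rowE mulmxK // mul0mx => /matrixP /(_ 0 k).
    by rewrite !mxE => /eqP; rewrite pnatr_eq0 andTb eqxx.
  rewrite dkE !eigenvalue_root_char /Bc -map_char_poly.
  by rewrite (fmorph_root (real_complex R)).
move: key; rewrite -E1 -E2 !mxE -rmorphM.
by rewrite lecR.
Qed.
End Ray.


Lemma sum_lift (R : zmodType) n (w : 'I_n) (G : 'I_n -> R) :
  \sum_(i < n.-1) G (lift w i) = \sum_i G i - G w.
Proof. by rewrite [in RHS](bigD1_ord w) //= addrC addrK. Qed.

Lemma degE (R : nzRingType) m (ad : rel 'I_m) i :
  (deg ad i)%:R = \sum_j ((ad i j)%:R : R).
Proof.
rewrite /deg -sum1_card natr_sum big_mkcond /=; apply: eq_bigr => j _.
by rewrite inE; case: (ad i j).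
Qed.

Lemma Aalpha_mul (R : comNzRingType) n (adj : rel 'I_n) (alpha : R) (z : 'cV[R]_n) i :
  (Aalpha adj alpha *m z) i 0 =
  alpha * (deg adj i)%:R * z i 0 + (1 - alpha) * \sum_j (adj i j)%:R * z j 0.
Proof.
rewrite /Aalpha /degmx /adjmx !mxE.
under eq_bigr => j _ do rewrite !mxE mulrDl.
rewrite big_split /= (bigD1 i) //= eqxx big1 ?addr0; last first.
  by move=> j /negbTE; rewrite eq_sym => ->; rewrite mulr0 mul0r.
by rewrite mulr_sumr; congr (_ + _); apply: eq_bigr => j _; rewrite mulrA.
Qed.

Theorem lemma3p3 (R : realType) (r : nat) (alpha : R) (n : nat) (adj : rel 'I_n)
    (lam lamw : R) (x : 'cV[R]_n) (w : 'I_n) :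
  (2 <= r)%N ->
  0 <= alpha -> alpha <= 1 - 1 / r%:R ->
  (2 <= n)%N ->
  simple_graph adj ->
  largest_eigenvalue (Aalpha adj alpha) lam ->
  (forall i, 0 <= x i 0) ->
  \sum_i (x i 0) ^+ 2 = 1 ->
  Aalpha adj alpha *m x = lam *: x ->
  (forall i, x w 0 <= x i 0) ->
  largest_eigenvalue (Aalpha (del_vertex adj w) alpha) lamw ->
  lamw >= lam * (1 - 2 * (x w 0) ^+ 2) / (1 - (x w 0) ^+ 2)
          - alpha * (1 - n%:R * (x w 0) ^+ 2) / (1 - (x w 0) ^+ 2).
Proof.
move=> _ ha0 _ hn [hsym hirr] _ xge0 xsum heig xmin [_ hlamw].
pose y (i : 'I_n) : R := x i 0. pose t : R := x w 0.
pose a (i j : 'I_n) : R := (adj i j)%:R.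
pose S i := \sum_j a i j * y j.
pose dg i := \sum_j a i j.
have Ei i : alpha * dg i * y i + (1 - alpha) * S i = lam * y i.
  have := congr1 (fun M : 'cV[R]_n => M i 0) heig; rewrite /= Aalpha_mul degE mxE => <-.
  done.
have Ht2 : n%:R * t ^+ 2 <= 1.
  have -> : n%:R * t ^+ 2 = \sum_(i < n) t ^+ 2 by rewrite sumr_const card_ord mulr_natl.
  rewrite -xsum; apply: ler_sum => i _.
  by rewrite ler_pXn2r // ?nnegrE ?xge0.
have t2lt : t ^+ 2 < 1.
  have : 2%:R * t ^+ 2 <= 1.
    apply: le_trans Ht2; apply: ler_wpM2r; first exact: sqr_ge0.
    by rewrite ler_nat.
  have := sqr_ge0 t; lra.
pose Bw := Aalpha (del_vertex adj w) alpha.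
have Bsym : Bw^T = Bw.
  apply/matrixP => i j; rewrite /Bw /Aalpha /degmx /adjmx !mxE /del_vertex hsym.
  by case: eqVneq => [->|]; rewrite ?eqxx // eq_sym => /negbTE ->.
pose v : 'rV[R]_n.-1 := \row_k y (lift w k).
have R1 := @ray _ _ _ _ Bsym hlamw v.
have vv : (v *m v^T) 0 0 = 1 - t ^+ 2.
  rewrite mxE (eq_bigr (fun k => (fun i => y i ^+ 2) (lift w k))) => [|k _].
    by rewrite (@sum_lift _ _ w (fun i => y i ^+ 2)) /= xsum.
  by rewrite !mxE expr2.
pose H i := alpha * (dg i - a i w) * y i + (1 - alpha) * (S i - a i w * t).
have vBv : (v *m Bw *m v^T) 0 0 = \sum_i y i * H i - t * H w.
  rewrite -mulmxA mxE -(@sum_lift _ _ w (fun i => y i * H i)); apply: eq_bigr => k _.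
  rewrite Aalpha_mul degE !mxE /H; congr (_ * (_ * _ * _ + _ * _)).
    by rewrite (@sum_lift _ _ w (fun j => a (lift w k) j)).
  rewrite /S (_ : t = y w) // -(@sum_lift _ _ w (fun j => a (lift w k) j * y j)).
  apply: eq_bigr => j _.
  by rewrite !mxE.
have aww : a w w = 0 by rewrite /a (negbTE (hirr w)).
have asym i : a i w = a w i by rewrite /a hsym.
have Hw : H w = lam * t by rewrite /H aww subr0 mul0r subr0 -Ei.
pose P := \sum_i a i w * y i ^+ 2.
have sumH : \sum_i y i * H i = lam - alpha * P - (1 - alpha) * t * S w.
  have pw i : y i * H i = lam * y i ^+ 2 - alpha * (a i w * y i ^+ 2)
                         - (1 - alpha) * t * (a w i * y i).
    rewrite -asym expr2 mulrA -Ei /H; ring.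
  rewrite (eq_bigr _ (fun i _ => pw i)) !sumrB -!mulr_sumr.
  have ys : \sum_i y i ^+ 2 = 1 := xsum.
  by rewrite ys mulr1.
have bound : P <= 1 - n%:R * t ^+ 2 + dg w * t ^+ 2.
  have -> : 1 - n%:R * t ^+ 2 + dg w * t ^+ 2 = \sum_i (y i ^+ 2 - (1 - a w i) * t ^+ 2).
    have e : \sum_i (1 - a w i) * t ^+ 2 = n%:R * t ^+ 2 - dg w * t ^+ 2.
      have -> : n%:R * t ^+ 2 = \sum_(i < n) t ^+ 2 by rewrite sumr_const card_ord mulr_natl.
      rewrite /dg mulr_suml -sumrB.
      by apply: eq_bigr => i _; rewrite mulrBl mul1r.
    have ys : \sum_i y i ^+ 2 = 1 := xsum.
    rewrite sumrB ys e; ring.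
  apply: ler_sum => i _; rewrite asym /a; case: (adj w i); rewrite ?subrr ?mul0r ?subr0 ?mul1r //.
  by rewrite subr_ge0 ler_pXn2r ?nnegrE ?xge0 ?xmin.
rewrite -/t -mulrBl ler_pdivrMr ?subr_gt0 //.
have Ewt := congr1 (fun z => z * t) (Ei w).
have hb := ler_wpM2l ha0 bound.
rewrite vv vBv sumH Hw in R1.
simpl in Ewt.
rewrite (_ : y w = t) // in Ewt.
move: R1 Ewt hb; generalize (S w) (dg w) P t lam lamw alpha (n%:R : R) => sw dw p tt l lw al nn.
move=> R1 Ewt hb.
nra.
Qed.
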